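(* If $P$ is a generic flat set of $n$ points in convex position in the plane, then $\operatorname{cr}(P)\ge n-3$.
   Context: A point set in convex position is flat if the maximum difference in $y$-coordinates between any two of its points is smaller than the minimum difference in $x$-coordinates between any two of its points. A finite planar point set is generic if no three of its points are collinear and every subset has a unique Euclidean minimum spanning tree (MST); for generic $X$, $T_X$ is its MST drawn with straight-line edges. For disjoint $R,B$ with $R\cup B$ generic, $\operatorname{cr}(R,B)$ is the number of crossings between edges of $T_R$ and edges of $T_B$, and $\operatorname{cr}(P)=\max\operatorname{cr}(R,B)$ over all partitions $P=R\cup B$ into two disjoint sets. *)

(* Defs.v *)
From mathcomp Require Import all_boot all_order all_algebra.
From mathcomp Require Import reals.
Set Implicit Arguments. Unset Strict Implicit. Unset Printing Implicit Defensive.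
Import Order.TTheory GRing.Theory Num.Theory.
Local Open Scope ring_scope.

(* A planar point set of n points is given by an injective map p : 'I_n -> R*R.  An (undirected) edge is an
   ordered pair (i, j) with i < j (so each edge has a unique representative). *)

Section Geometry.
Variable R : realType.
Variable n : nat.
Implicit Types (p : 'I_n -> R * R) (S : {set 'I_n}) (E : {set 'I_n * 'I_n}).

Definition orient (a b c : R * R) : R :=
  (b.1 - a.1) * (c.2 - a.2) - (b.2 - a.2) * (c.1 - a.1).

Definition dist (a b : R * R) : R :=
  Num.sqrt ((a.1 - b.1) ^+ 2 + (a.2 - b.2) ^+ 2).

Definition no_three_collinear p : Prop :=
  forall i j k : 'I_n, i != j -> j != k -> i != k -> orient (p i) (p j) (p k) != 0.

Definition convex_position p : Prop :=
  forall i : 'I_n, ~ exists lam : 'I_n -> R,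
    [/\ forall j, 0 <= lam j, lam i = 0, \sum_j lam j = 1,
        \sum_j lam j * (p j).1 = (p i).1 & \sum_j lam j * (p j).2 = (p i).2].

Definition flat p : Prop :=
  forall i j k l : 'I_n, k != l -> `|(p i).2 - (p j).2| < `|(p k).1 - (p l).1|.

Definition edge_rel E : rel 'I_n := fun x y => ((x, y) \in E) || ((y, x) \in E).

Definition spanning_tree S E : Prop :=
  [/\ forall e, e \in E -> [&& (e.1 < e.2)%N, e.1 \in S & e.2 \in S],
      forall x y, x \in S -> y \in S -> connect (edge_rel E) x y
    & #|E| = (#|S|).-1].

Definition weight p E : R := \sum_(e in E) dist (p e.1) (p e.2).

Definition is_MST p S E : Prop :=
  spanning_tree S E /\ forall E', spanning_tree S E' -> weight p E <= weight p E'.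

Definition generic p : Prop :=
  no_three_collinear p /\ forall S, exists! E, is_MST p S E.

Definition seg_cross (a b c d : R * R) : bool :=
  (orient a b c * orient a b d < 0) && (orient c d a * orient c d b < 0).

Definition crossings p (ER EB : {set 'I_n * 'I_n}) : nat :=
  #|[set ef : ('I_n * 'I_n) * ('I_n * 'I_n) |
      [&& ef.1 \in ER, ef.2 \in EB &
          seg_cross (p ef.1.1) (p ef.1.2) (p ef.2.1) (p ef.2.2)]]|.

(* cr(P) >= k : some partition P = R u B has cr(R, B) >= k, where
   cr(R, B) is the number of crossings of the (unique) MSTs T_R and T_B *)
Definition cr_ge p (k : nat) : Prop :=
  exists Rs : {set 'I_n},
    forall ER EB, is_MST p Rs ER -> is_MST p (~: Rs) EB -> (k <= crossings p ER EB)%N.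

End Geometry.

(* Main.v *)
Require Import Defs.
From mathcomp Require Import all_boot all_order all_algebra.
From mathcomp Require Import reals.
From mathcomp Require Import ring lra zify.
Set Implicit Arguments. Unset Strict Implicit. Unset Printing Implicit Defensive.
Import Order.TTheory GRing.Theory Num.Theory.


Section Graph.
Variable n : nat.
Implicit Types (S : {set 'I_n}) (E : {set 'I_n * 'I_n}).

Lemma connect_ind (T : finType) (e : rel T) (P : T -> Prop) x y :
  P x -> (forall a b, P a -> e a b -> P b) -> connect e x y -> P y.
Proof.
move=> Px st /connectP [s hp ->].
elim: s x Px hp => [|z s IH] x Px //= /andP [exz hp].
exact: IH (st _ _ Px exz) hp.
Qed.

Lemma edge_rel_sym E : symmetric (edge_rel E).
Proof. by move=> x y; rewrite /edge_rel orbC. Qed.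

Lemma connect_E_sym E x y : connect (edge_rel E) x y = connect (edge_rel E) y x.
Proof. by apply: sym_connect_sym; apply: edge_rel_sym. Qed.

Lemma connect_mono E E' x y : E \subset E' ->
  connect (edge_rel E) x y -> connect (edge_rel E') x y.
Proof.
move=> /subsetP sub; apply: connect_sub => a b; rewrite /edge_rel => /orP [h|h];
by apply: connect1; rewrite /edge_rel (sub _ h) ?orbT.
Qed.

Lemma edge_rel_D1 E f a b : edge_rel E a b ->
  [|| edge_rel (E :\ f) a b, b == f.1 | b == f.2].
Proof.
rewrite /edge_rel !in_setD1.
case/orP => h; rewrite h !andbT.
  by case: (eqVneq (a, b) f) => [<-|_]; rewrite ?eqxx ?orbT.
by case: (eqVneq (b, a) f) => [<-|_]; rewrite ?eqxx ?orbT.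
Qed.

Definition edges_in S E := forall e, e \in E -> (e.1 \in S) && (e.2 \in S).
Definition conn_on S E := forall x y, x \in S -> y \in S -> connect (edge_rel E) x y.

Lemma edge_rel_in S E a b : edges_in S E -> edge_rel E a b -> (a \in S) && (b \in S).
Proof.
move=> hE; rewrite /edge_rel => /orP [] /hE //=.
by rewrite andbC.
Qed.

Lemma closure_D1 E f x : f \in E -> connect (edge_rel E) f.1 x ->
  connect (edge_rel (E :\ f)) f.1 x || connect (edge_rel (E :\ f)) f.2 x.
Proof.
move=> fE; apply: (connect_ind (P := fun y =>
  connect (edge_rel (E :\ f)) f.1 y || connect (edge_rel (E :\ f)) f.2 y)).
  by rewrite connect0.
move=> a b ha /(edge_rel_D1 f) /or3P [h|/eqP->|/eqP->]; rewrite ?connect0 ?orbT //.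
case/orP: ha => ha.
  by rewrite (connect_trans ha (connect1 h)).
by rewrite (connect_trans ha (connect1 h)) orbT.
Qed.

Lemma component_conn S E r :
  edges_in S E ->
  let C := [set x in S | connect (edge_rel E) r x] in
  let EC := [set e in E | (e.1 \in C) && (e.2 \in C)] in
  edges_in C EC /\ conn_on C EC.
Proof.
move=> hE C EC; split.
  by move=> e; rewrite inE => /andP [].
have key : forall x, x \in C -> connect (edge_rel EC) r x.
  move=> x; rewrite inE => /andP [_ hx].
  move: hx; apply: (connect_ind (P := fun y => connect (edge_rel EC) r y)).
    by rewrite connect0.
  move=> a b ha hab.
  have hsub : EC \subset E by apply/subsetP => e; rewrite inE => /andP [].
  have rA := connect_mono hsub ha.
  case/andP: (edge_rel_in hE hab) => aS bS.
  have aC : a \in C by rewrite inE aS rA.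
  have bC : b \in C by rewrite inE bS (connect_trans rA (connect1 hab)).
  apply: (connect_trans ha); apply: connect1.
  have ECin : forall e, e \in E -> e.1 \in C -> e.2 \in C -> e \in EC.
    by move=> e h1 h2 h3; apply/setIdP; split => //; apply/andP.
  by case/orP: hab => h; apply/orP; [left|right]; apply: ECin.
move=> x y xC yC; apply: (connect_trans (y:=r)).
  by rewrite connect_E_sym; apply: key.
exact: key.
Qed.

Lemma empty_conn S : conn_on S set0 -> #|S| <= 1.
Proof.
move=> h; apply/card_le1P => x xS y.
apply/idP/idP => [yS|]; last by rewrite inE => /eqP ->.
rewrite inE; move: (h x y xS yS).
apply: (connect_ind (P := fun z => z == x)) => [|a b _]; first exact: eqxx.
by rewrite /edge_rel !inE.
Qed.

Lemma tree_count k S E : #|E| <= k -> edges_in S E -> conn_on S E -> #|S| <= #|E|.+1.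
Proof.
elim: k S E => [|k IH] S E.
  rewrite leqn0 => /eqP/cards0_eq -> _ /empty_conn; by rewrite cards0.
move=> hk hE hC.
case: (set_0Vmem E) => [E0|[f fE]].
  by move: hC; rewrite E0 => /empty_conn; rewrite cards0.
set E0 := E :\ f.
have cardE : #|E| = #|E0|.+1 by rewrite (cardsD1 f) fE.
have hk0 : #|E0| <= k by move: hk; rewrite cardE.
have hE0 : edges_in S E0.
  by move=> e; rewrite inE => /andP [_ /hE].
case/andP: (hE f fE) => uS vS.
have clo : forall x, x \in S ->
    connect (edge_rel E0) f.1 x || connect (edge_rel E0) f.2 x.
  by move=> x xS; apply: closure_D1 => //; apply: hC.
case: (boolP (connect (edge_rel E0) f.1 f.2)) => huv.
  have hC0 : conn_on S E0.
    have key : forall x, x \in S -> connect (edge_rel E0) f.1 x.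
      move=> x xS; case/orP: (clo x xS) => // h.
      exact: connect_trans huv h.
    move=> x y xS yS; apply: (connect_trans (y:=f.1)).
      by rewrite connect_E_sym; apply: key.
    exact: key.
  by rewrite cardE; apply: leq_trans (IH S E0 hk0 hE0 hC0) _.
have [hEA hCA] := component_conn f.1 hE0.
have [hEB hCB] := component_conn f.2 hE0.
set A := [set x in S | connect (edge_rel E0) f.1 x] in hEA hCA.
set B := [set x in S | connect (edge_rel E0) f.2 x] in hEB hCB.
set EA := [set e in E0 | (e.1 \in A) && (e.2 \in A)] in hEA hCA.
set EB := [set e in E0 | (e.1 \in B) && (e.2 \in B)] in hEB hCB.
have disjAB : A :&: B = set0.
  apply/setP => x; rewrite in_setI in_set0.
  apply/negP => /andP [hA hB]; move: hA hB; rewrite !inE => /andP [_ h1] /andP [_ h2].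
  by move/negP: huv; apply; apply: (connect_trans h1); rewrite connect_E_sym.
have SAB : S \subset A :|: B.
  by apply/subsetP => x xS; rewrite !inE xS /=; apply: clo.
have disjE : EA :&: EB = set0.
  apply/setP => e; rewrite in_setI in_set0.
  apply/negP => /andP [hA hB].
  move/setIdP: hA => [_ /andP [h1 _]]; move/setIdP: hB => [_ /andP [h2 _]].
  have : e.1 \in A :&: B by rewrite in_setI h1 h2.
  by rewrite disjAB in_set0.
have subE : EA :|: EB \subset E0.
  by apply/subsetP => e; rewrite !inE => /orP [] /andP [].
have cA : #|EA| <= k.
  by apply: leq_trans hk0; apply: subset_leq_card; apply/subsetP => e; rewrite inE => /andP [].
have cB : #|EB| <= k.
  by apply: leq_trans hk0; apply: subset_leq_card; apply/subsetP => e; rewrite inE => /andP [].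
have iA := IH A EA cA hEA hCA.
have iB := IH B EB cB hEB hCB.
have h1 := subset_leq_card SAB.
have h2 := cardsUI A B.
have h3 := cardsUI EA EB.
have h4 := subset_leq_card subE.
rewrite disjAB cards0 addn0 in h2.
rewrite disjE cards0 addn0 in h3.
rewrite cardE; lia.
Qed.

End Graph.

Section Geo.
Local Open Scope ring_scope.
Variable R : realType.
Variable n : nat.
Variable p : 'I_n -> R * R.
Hypothesis hflat : flat p.
Implicit Types (S : {set 'I_n}) (E : {set 'I_n * 'I_n}).

Local Notation X i := (p i).1.
Local Notation Y i := (p i).2.

Lemma Xneq (k l : 'I_n) : k != l -> X k != X l.
Proof.
move=> kl; have := hflat k k kl; rewrite subrr normr0 normr_gt0.
by rewrite subr_eq0.
Qed.

Lemma Xinj (k l : 'I_n) : X k = X l -> k = l.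
Proof. by move=> e; apply/eqP; apply: contraTT (eqxx (X k)) => /Xneq; rewrite e. Qed.

Lemma dist_sym (a b : R * R) : dist a b = dist b a.
Proof. by rewrite /dist; congr Num.sqrt; lra. Qed.

Lemma dist_between (a w c : 'I_n) : X a < X w -> X w < X c ->
  dist (p a) (p w) < dist (p a) (p c) /\ dist (p w) (p c) < dist (p a) (p c).
Proof.
move=> h1 h2.
have nwc : w != c by apply: contraTneq h2 => ->; rewrite ltxx.
have naw : a != w by apply: contraTneq h1 => ->; rewrite ltxx.
have d1 := hflat a w nwc.
have d2 := hflat w c naw.
rewrite (ltr0_norm (x := X w - X c)) ?subr_lt0 // in d1.
rewrite (ltr0_norm (x := X a - X w)) ?subr_lt0 // in d2.
have e1 : (Y a - Y w) ^+ 2 < (X c - X w) ^+ 2.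
  rewrite -(real_normK (num_real (Y a - Y w))); have := normr_ge0 (Y a - Y w); nra.
have e2 : (Y w - Y c) ^+ 2 < (X w - X a) ^+ 2.
  rewrite -(real_normK (num_real (Y w - Y c))); have := normr_ge0 (Y w - Y c); nra.
have pos : 0 < (X a - X c) ^+ 2 + (Y a - Y c) ^+ 2.
  have hp : 0 < X c - X a by lra.
  have := mulr_gt0 hp hp; have := sqr_ge0 (Y a - Y c); nra.
have hq : 0 < X w - X a by lra.
have hr : 0 < X c - X w by lra.
have := mulr_gt0 hq hr; have := sqr_ge0 (Y a - Y c).
rewrite /dist !ltr_sqrt //; split; nra.
Qed.


Definition edge (i j : 'I_n) : 'I_n * 'I_n := if (i < j)%N then (i, j) else (j, i).

Lemma edge_cases i j : edge i j = (i, j) \/ edge i j = (j, i).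
Proof. by rewrite /edge; case: ifP; [left|right]. Qed.

Lemma edge_fs i j : ((edge i j).1 = i /\ (edge i j).2 = j) \/ ((edge i j).1 = j /\ (edge i j).2 = i).
Proof. by case: (edge_cases i j) => ->; [left|right]. Qed.

Lemma edge_sym i j : edge i j = edge j i.
Proof.
rewrite /edge; case: (ltngtP i j) => h //.
by have -> : i = j by apply: val_inj.
Qed.

Lemma edge_lt i j : i != j -> ((edge i j).1 < (edge i j).2)%N.
Proof.
move=> ij; rewrite /edge; case: ifP => //= /negbT; rewrite -leqNgt leq_eqVlt.
case/orP => // /eqP h; move: ij.
by have e : j = i := val_inj h; rewrite e eqxx.
Qed.

Lemma edge_rel_edge (E : {set 'I_n * 'I_n}) x y : edge x y \in E -> edge_rel E x y.
Proof. by rewrite /edge_rel; case: (edge_cases x y) => ->  ->; rewrite ?orbT. Qed.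

Lemma dist_edge i j : dist (p (edge i j).1) (p (edge i j).2) = dist (p i) (p j).
Proof. by case: (edge_cases i j) => -> //=; rewrite dist_sym. Qed.

Lemma tree_prop S E : spanning_tree S E -> edges_in S E /\ conn_on S E.
Proof.
case=> h1 h2 _; split => // e /h1 /and3P [_ -> ->] //.
Qed.

Lemma exch S E a c w : is_MST p S E -> edge a c \in E -> w \in S -> w != c ->
  connect (edge_rel (E :\ edge a c)) a w ->
  dist (p w) (p c) < dist (p a) (p c) -> False.
Proof.
move=> [hT hmin] fE wS wc haw hd.
have [hE hC] := tree_prop hT.
case: hT => hT1 hT2 hT3.
set f := edge a c in fE haw.
set E0 := E :\ f in haw.
have acS : (a \in S) && (c \in S).
  by have := hE f fE; case: (edge_fs a c) => [[-> ->]|[-> ->]] //; rewrite andbC.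
case/andP: acS => aS cS.
have cardE : #|E| = #|E0|.+1 by rewrite (cardsD1 f) fE.
have clo : forall x, x \in S -> connect (edge_rel E0) a x || connect (edge_rel E0) c x.
  move=> x xS; have := closure_D1 fE (hC _ x (proj1 (andP (hE f fE))) xS).
  by case: (edge_fs a c) => [[-> ->]|[-> ->]] //; rewrite orbC.
have hE0 : edges_in S E0 by move=> e; rewrite inE => /andP [_ /hE].
case: (boolP (connect (edge_rel E0) a c)) => hac.
  have hC0 : conn_on S E0.
    have key : forall x, x \in S -> connect (edge_rel E0) a x.
      move=> x xS; case/orP: (clo x xS) => // h.
      exact: connect_trans hac h.
    move=> x y xS yS; apply: (connect_trans (y:=a)).
      by rewrite connect_E_sym; apply: key.
    exact: key.
  have := tree_count (leqnn _) hE0 hC0.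
  rewrite -cardE hT3.
  have : (0 < #|S|)%N by apply/card_gt0P; exists a.
  lia.
set g := edge w c.
have gE0 : g \notin E0.
  apply/negP => /edge_rel_edge h.
  by move/negP: hac; apply; apply: (connect_trans haw); apply: connect1.
set E1 := g |: E0.
have sub01 : E0 \subset E1 by apply/subsetP => e; rewrite !inE => ->; rewrite orbT.
have gE1 : g \in E1 by rewrite !inE eqxx.
have hT' : spanning_tree S E1.
  split.
  - move=> e; rewrite in_setU1 => /orP [/eqP ->|].
      rewrite edge_lt //.
      by rewrite /g; case: (edge_cases w c) => -> /=; rewrite ?wS ?cS.
    by rewrite inE => /andP [_ /hT1].
  - have key : forall x, x \in S -> connect (edge_rel E1) a x.
      move=> x xS; case/orP: (clo x xS) => h; first exact: connect_mono sub01 h.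
      apply: (connect_trans (y:=c)); last exact: connect_mono sub01 h.
      apply: (connect_trans (connect_mono sub01 haw)).
      by apply: connect1; apply: edge_rel_edge.
    move=> x y xS yS; apply: (connect_trans (y:=a)).
      by rewrite connect_E_sym; apply: key.
    exact: key.
  - by rewrite cardsU1 gE0 -hT3 cardE.
have := hmin _ hT'.
rewrite /weight (big_setD1 f fE) (big_setU1 _ gE0) /= /g /f !dist_edge.
lra.
Qed.

Definition consec S u v := [&& u \in S, v \in S, X u < X v &
  [forall w, (w \in S) ==> ~~ ((X u < X w) && (X w < X v))]].

Definition Pth S := [set e | [exists u, exists v, consec S u v && (e == edge u v)]].

Lemma mst_sub S E : is_MST p S E -> E \subset Pth S.
Proof.
move=> hM; have [hT hmin] := hM.
have [hE hC] := tree_prop hT.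
case: hT => hT1 _ _.
apply/subsetP => e eE.
case/and3P: (hT1 e eE) => lt12 e1S e2S.
have ne12 : e.1 != e.2 by apply: contraTneq lt12 => ->; rewrite ltnn.
have eedge : e = edge e.1 e.2 by rewrite /edge lt12; case: e {eE lt12 e1S e2S ne12}.
have main : forall u v, u \in S -> v \in S -> X u < X v -> e = edge u v -> consec S u v.
  move=> u v uS vS huv ee.
  rewrite /consec uS vS huv /=; apply/forallP => w; apply/implyP => wS.
  apply/negP => /andP [h1 h2].
  have [d1 d2] := dist_between h1 h2.
  rewrite ee in eE.
  have clo := closure_D1 eE (hC _ w (proj1 (andP (hE _ eE))) wS).
  have : connect (edge_rel (E :\ edge u v)) u w || connect (edge_rel (E :\ edge u v)) v w.
    by move: clo; case: (edge_fs u v) => [[-> ->]|[-> ->]] //; rewrite orbC.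
  case/orP => hw.
    apply: (exch hM eE wS _ hw) => //.
    by apply: contraTneq h2 => ->; rewrite ltxx.
  rewrite edge_sym in eE hw.
  apply: (exch hM eE wS _ hw).
    by apply: contraTneq h1 => ->; rewrite ltxx.
  by rewrite dist_sym (dist_sym (p v)).
rewrite inE; apply/existsP.
have := Xneq ne12; rewrite neq_lt => /orP [h|h].
  by exists e.1; apply/existsP; exists e.2; rewrite main // -eedge eqxx.
exists e.2; apply/existsP; exists e.1; rewrite (edge_sym e.2 e.1) -eedge eqxx andbT.
by apply: main => //; rewrite edge_sym.
Qed.

Lemma Pth_card S : (#|Pth S| <= (#|S|).-1)%N.
Proof.
case: (set_0Vmem S) => [->|[i0 i0S]].
  rewrite cards0 leqn0 cards_eq0; apply/eqP/setP => e; rewrite /Pth !inE.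
  by apply/negbTE/existsP => -[u /existsP [v]]; rewrite /consec inE.
have [m mS mmax] : exists2 m, m \in S & forall j, j \in S -> X j <= X m.
  by case: (@arg_maxP _ _ _ i0 (mem S) (fun i => X i) i0S) => m mS hm; exists m.
pose lft (e : 'I_n * 'I_n) := if X e.1 < X e.2 then e.1 else e.2.
have lftE : forall u v, consec S u v -> lft (edge u v) = u.
  move=> u v /and4P [_ _ huv _]; rewrite /lft.
  case: (edge_cases u v) => -> /=; rewrite ?huv //.
  by rewrite ltNge (ltW huv).
have inj : {in Pth S &, injective lft}.
  move=> e e'; rewrite !inE => /existsP [u /existsP [v /andP [cuv /eqP ->]]].
  move=> /existsP [u' /existsP [v' /andP [cuv' /eqP ->]]].
  rewrite !lftE // => equ; subst u'.
  case/and4P: cuv => uS vS huv /forallP hv.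
  case/and4P: cuv' => _ v'S huv' /forallP hv'.
  have : X v = X v'.
    case: (ltgtP (X v) (X v')) => // h.
      by move: (hv' v); rewrite vS huv h.
    by move: (hv v'); rewrite v'S huv' h.
  by move/Xinj => ->.
rewrite -(card_in_imset inj).
have : lft @: Pth S \subset S :\ m.
  apply/subsetP => u' /imsetP [e]; rewrite inE => /existsP [u /existsP [v /andP [cuv /eqP ->]]] ->.
  rewrite lftE // !inE.
  case/and4P: cuv => uS vS huv _; rewrite uS andbT.
  apply/eqP => um; have := mmax v vS; rewrite -um.
  by rewrite leNgt huv.
move/subset_leq_card; rewrite (cardsD1 m S) mS.
by [].
Qed.

Lemma mst_eq S E : is_MST p S E -> E = Pth S.
Proof.
move=> hM; apply/eqP; rewrite eqEcard mst_sub //=.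
case: hM => [[_ _ ->] _]; exact: Pth_card.
Qed.

End Geo.

Section Conv.
Local Open Scope ring_scope.
Variable R : realType.
Variable n : nat.
Variable p : 'I_n -> R * R.
Hypothesis hconv : convex_position p.

Local Notation X i := (p i).1.
Local Notation Y i := (p i).2.

Lemma sum_delta c (a : 'I_n) (F : 'I_n -> R) :
  \sum_j (c * (j == a)%:R) * F j = c * F a.
Proof.
rewrite (bigD1 a) //= eqxx mulr1 big1 ?addr0 // => j /negbTE ->.
by rewrite mulr0 mul0r.
Qed.

Lemma sum4 (c1 c2 c3 c4 : R) (a c d e : 'I_n) (F : 'I_n -> R) :
  \sum_j (c1 * (j == a)%:R + c2 * (j == c)%:R + c3 * (j == d)%:R + c4 * (j == e)%:R) * F j
  = c1 * F a + c2 * F c + c3 * F d + c4 * F e.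
Proof.
under eq_bigr => j _ do rewrite !mulrDl.
by rewrite !big_split /= !sum_delta.
Qed.

Lemma convG (a c d e b : 'I_n) :
  X a < X b -> X b < X c -> X d < X b -> X b < X e ->
  b != a -> b != c -> b != d -> b != e ->
  0 < orient (p a) (p c) (p b) -> orient (p d) (p e) (p b) < 0 -> False.
Proof.
move=> h1 h2 h3 h4 ba bc bd be o1 o2.
apply: (hconv (i := b)).
set t := (X b - X a) / (X c - X a).
set u := (X b - X d) / (X e - X d).
set y1 := Y a + t * (Y c - Y a).
set y2 := Y d + u * (Y e - Y d).
set s := (y2 - Y b) / (y2 - y1).
have nz1 : X c - X a != 0 by rewrite subr_eq0; apply: contraTneq h2 => ->; rewrite ltNge (ltW h1).
have nz2 : X e - X d != 0 by rewrite subr_eq0; apply: contraTneq h4 => ->; rewrite ltNge (ltW h3).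
have p1 : 0 < X c - X a by lra.
have p2 : 0 < X e - X d by lra.
have t0 : 0 < t by rewrite /t divr_gt0 //; lra.
have t1 : t < 1 by rewrite /t ltr_pdivrMr //; lra.
have u0 : 0 < u by rewrite /u divr_gt0 //; lra.
have u1 : u < 1 by rewrite /u ltr_pdivrMr //; lra.
have ey1 : Y b - y1 = orient (p a) (p c) (p b) / (X c - X a).
  by rewrite /y1 /t /orient; field.
have ey2 : Y b - y2 = orient (p d) (p e) (p b) / (X e - X d).
  by rewrite /y2 /u /orient; field.
have q1 : 0 < Y b - y1 by rewrite ey1 divr_gt0.
have q2 : Y b - y2 < 0 by rewrite ey2 ltr_pdivrMr // mul0r.
have nz3 : y2 - y1 != 0 by apply/eqP; lra.
have p3 : 0 < y2 - y1 by lra.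
have s0 : 0 < s by rewrite /s divr_gt0 //; lra.
have s1 : s < 1 by rewrite /s ltr_pdivrMr //; lra.
have hx1 : (1 - t) * X a + t * X c = X b by rewrite /t; field.
have hx2 : (1 - u) * X d + u * X e = X b by rewrite /u; field.
have hy : s * y1 + (1 - s) * y2 = Y b by rewrite /s; field.
pose lam (j : 'I_n) := s * (1 - t) * (j == a)%:R + s * t * (j == c)%:R +
   (1 - s) * (1 - u) * (j == d)%:R + (1 - s) * u * (j == e)%:R.
have sumF : forall F : 'I_n -> R, \sum_j lam j * F j =
    s * (1 - t) * F a + s * t * F c + (1 - s) * (1 - u) * F d + (1 - s) * u * F e.
  by move=> F; rewrite /lam sum4.
exists lam; split.
- move=> j; rewrite /lam.
  have z : forall (b0 : bool), 0 <= (b0%:R : R) by case.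
  have := z (j == a); have := z (j == c); have := z (j == d); have := z (j == e).
  move=> za zc zd ze.
  have k1 : 0 <= s * (1 - t) by apply: mulr_ge0; lra.
  have k2 : 0 <= s * t by apply: mulr_ge0; lra.
  have k3 : 0 <= (1 - s) * (1 - u) by apply: mulr_ge0; lra.
  have k4 : 0 <= (1 - s) * u by apply: mulr_ge0; lra.
  by rewrite !addr_ge0 // mulr_ge0.
- by rewrite /lam (negbTE ba) (negbTE bc) (negbTE bd) (negbTE be) !mulr0 !addr0.
- have := sumF (fun _ => 1); under eq_bigr => j _ do rewrite mulr1.
  move=> ->; rewrite !mulr1; ring.
- rewrite sumF.
  have -> : s * (1 - t) * X a + s * t * X c + (1 - s) * (1 - u) * X d + (1 - s) * u * X e
    = s * ((1 - t) * X a + t * X c) + (1 - s) * ((1 - u) * X d + u * X e) by ring.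
  by rewrite hx1 hx2; ring.
- rewrite sumF -hy /y1 /y2; ring.
Qed.

End Conv.

Section Main.
Local Open Scope ring_scope.
Variable R : realType.
Variable n : nat.
Variable p : 'I_n -> R * R.
Hypothesis hflat : flat p.
Hypothesis hnc : no_three_collinear p.
Hypothesis hconv : convex_position p.
Variable d0 : 'I_n.

Local Notation X i := (p i).1.
Local Notation Y i := (p i).2.

Definition rkn (i : 'I_n) : nat := #|[set j | X j < X i]|.

Lemma rkn_lt i : (rkn i < n)%N.
Proof.
rewrite /rkn.
have sub : [set j | X j < X i] \subset [set~ i].
  by apply/subsetP => j; rewrite !inE; apply: contraTneq => ->; rewrite ltxx.
have := subset_leq_card sub; rewrite cardsC1 card_ord.
have := ltn_ord i; lia.
Qed.

Lemma rkn_mono i j : X i < X j -> (rkn i < rkn j)%N.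
Proof.
move=> h; apply: proper_card; apply/properP; split.
  by apply/subsetP => k; rewrite !inE => hk; exact: lt_trans hk h.
by exists i; rewrite !inE ?ltxx.
Qed.

Lemma rkn_ltE i j : (rkn i < rkn j)%N = (X i < X j).
Proof.
apply/idP/idP; last exact: rkn_mono.
move=> h; case: (ltgtP (X i) (X j)) => // h'.
  by have := rkn_mono h'; lia.
by move/(Xinj hflat): h' h => ->; rewrite ltnn.
Qed.

Definition rk i : 'I_n := Ordinal (rkn_lt i).

Lemma rk_inj : injective rk.
Proof.
move=> i j /(congr1 val) /= e; apply: (Xinj hflat).
case: (ltgtP (X i) (X j)) => // h; have := rkn_mono h; rewrite e ltnn //.
Qed.

Definition sig := invF rk_inj.
Definition pt (k : nat) : 'I_n := sig (insubd d0 k).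

Lemma rkn_pt k : (k < n)%N -> rkn (pt k) = k.
Proof.
move=> kn; have : rk (pt k) = insubd d0 k by rewrite /pt /sig f_invF.
by move/(congr1 val) => /=; rewrite val_insubd kn.
Qed.

Lemma pt_rkn i : pt (rkn i) = i.
Proof.
rewrite /pt; have -> : insubd d0 (rkn i) = rk i.
  by apply: val_inj; rewrite val_insubd /= rkn_lt.
exact: invF_f.
Qed.

Lemma Xpt_lt u v : (u < n)%N -> (v < n)%N -> (X (pt u) < X (pt v)) = (u < v)%N.
Proof. by move=> un vn; rewrite -rkn_ltE !rkn_pt. Qed.

Lemma pt_neq u v : (u < n)%N -> (v < n)%N -> u <> v -> pt u != pt v.
Proof. by move=> un vn uv; apply/eqP => /(congr1 rkn); rewrite !rkn_pt. Qed.

Definition lab k := orient (p (pt 0)) (p (pt n.-1)) (p (pt k)) < 0.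

Lemma chain i j l : (i < j)%N -> (j < l)%N -> (l < n)%N ->
  if lab j then orient (p (pt i)) (p (pt l)) (p (pt j)) < 0
  else 0 < orient (p (pt i)) (p (pt l)) (p (pt j)).
Proof.
move=> ij jl ln.
have jn : (j < n)%N by lia.
have iN : (i < n)%N by lia.
have n1 : (n.-1 < n)%N by lia.
have o0 : (0 < n)%N by lia.
have x1 : X (pt i) < X (pt j) by rewrite Xpt_lt.
have x2 : X (pt j) < X (pt l) by rewrite Xpt_lt.
have x3 : X (pt 0) < X (pt j) by rewrite Xpt_lt //; lia.
have x4 : X (pt j) < X (pt n.-1) by rewrite Xpt_lt //; lia.
have onz : orient (p (pt i)) (p (pt l)) (p (pt j)) != 0.
  by apply: hnc; apply: pt_neq => //; lia.
have lnz : orient (p (pt 0)) (p (pt n.-1)) (p (pt j)) != 0.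
  by apply: hnc; apply: pt_neq => //; lia.
have bi : pt j != pt i by apply: pt_neq => //; lia.
have bl : pt j != pt l by apply: pt_neq => //; lia.
have b0 : pt j != pt 0 by apply: pt_neq => //; lia.
have bN : pt j != pt n.-1 by apply: pt_neq => //; lia.
rewrite /lab; case: ifP => hl.
  move: onz; rewrite neq_lt => /orP [//|h].
  by case: (convG hconv x1 x2 x3 x4 bi bl b0 bN h hl).
move: lnz; rewrite neq_lt hl /= => h0.
move: onz; rewrite neq_lt => /orP [h|//].
by case: (convG hconv x3 x4 x1 x2 b0 bN bi bl h0 h).
Qed.

Lemma seg_cross_sw1 (a b c d : R * R) : seg_cross b a c d = seg_cross a b c d.
Proof.
rewrite /seg_cross.
have -> : orient b a c = - orient a b c by rewrite /orient; ring.
have -> : orient b a d = - orient a b d by rewrite /orient; ring.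
by rewrite mulrNN [orient c d b * _]mulrC.
Qed.

Lemma seg_cross_com (a b c d : R * R) : seg_cross c d a b = seg_cross a b c d.
Proof. by rewrite /seg_cross andbC. Qed.

Lemma seg_cross_sw2 (a b c d : R * R) : seg_cross a b d c = seg_cross a b c d.
Proof. by rewrite seg_cross_com seg_cross_sw1 seg_cross_com. Qed.

Lemma crossX1 a b c d : (a < b)%N -> (b < c)%N -> (c < d)%N -> (d < n)%N ->
  lab b = lab c -> seg_cross (p (pt a)) (p (pt c)) (p (pt b)) (p (pt d)).
Proof.
move=> ab bc cd dn hl.
have c1 := chain ab bc (ltn_trans cd dn).
have c2 := chain (ltn_trans ab bc) cd dn.
have c3 := chain ab (ltn_trans bc cd) dn.
have c4 := chain bc cd dn.
rewrite /seg_cross.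
have -> : orient (p (pt a)) (p (pt c)) (p (pt d)) = - orient (p (pt a)) (p (pt d)) (p (pt c))
  by rewrite /orient; ring.
have -> : orient (p (pt b)) (p (pt d)) (p (pt a)) = - orient (p (pt a)) (p (pt d)) (p (pt b))
  by rewrite /orient; ring.
move: c1 c2 c3 c4; rewrite -hl; case: (lab b) => c1 c2 c3 c4; apply/andP; split; nra.
Qed.

Lemma crossX2 a b c d : (a < b)%N -> (b < c)%N -> (c < d)%N -> (d < n)%N ->
  lab b != lab c -> seg_cross (p (pt a)) (p (pt d)) (p (pt b)) (p (pt c)).
Proof.
move=> ab bc cd dn hl.
have c1 := chain ab bc (ltn_trans cd dn).
have c2 := chain (ltn_trans ab bc) cd dn.
have c3 := chain ab (ltn_trans bc cd) dn.
have c4 := chain bc cd dn.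
rewrite /seg_cross.
have -> : orient (p (pt b)) (p (pt c)) (p (pt a)) = - orient (p (pt a)) (p (pt c)) (p (pt b))
  by rewrite /orient; ring.
have -> : orient (p (pt b)) (p (pt c)) (p (pt d)) = - orient (p (pt b)) (p (pt d)) (p (pt c))
  by rewrite /orient; ring.
move: c1 c2 c3 c4 hl; case: (lab b); case: (lab c) => // c1 c2 c3 c4 _;
  apply/andP; split; nra.
Qed.


Fixpoint col (k : nat) : bool :=
  match k with
  | 0 => false
  | k'.+1 => if k' == 0%N then true
             else if k == n.-1 then ~~ col k'
             else xorb (col k') (lab k' == lab k)
  end.

Lemma col0 : col 0 = false. Proof. by []. Qed.
Lemma col1 : col 1 = true. Proof. by []. Qed.

Lemma col_mid k : (2 <= k)%N -> (k < n.-1)%N -> col k = xorb (col k.-1) (lab k.-1 == lab k).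
Proof.
case: k => [|[|k]] // _ h /=.
by rewrite (ltn_eqF h).
Qed.

Lemma col_last : (3 <= n)%N -> col n.-1 = ~~ col n.-2.
Proof.
move=> h3; have -> : n.-1 = (n.-2).+1 by lia.
rewrite /=; have -> : (n.-2 == 0%N) = false by apply/negbTE; lia.
by rewrite -(_ : n.-1 = (n.-2).+1) ?eqxx //; lia.
Qed.

Lemma prev_ex (c : nat -> bool) t K j0 : (j0 < K)%N -> c j0 = t ->
  exists a, [/\ (a < K)%N, c a = t & forall j, (a < j < K)%N -> c j != t].
Proof.
move=> j0K cj0.
have exP : exists i, (i < K)%N && (c i == t) by exists j0; rewrite j0K cj0 eqxx.
have ubP : forall i, (i < K)%N && (c i == t) -> (i <= K)%N.
  by move=> i /andP [h _]; apply: ltnW.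
case: (ex_maxnP exP ubP) => a /andP [aK /eqP ca] hmax.
exists a; split => // j /andP [aj jK]; apply/negP => /eqP cj.
have := hmax j; rewrite jK cj eqxx => /(_ isT); lia.
Qed.

Lemma next_ex (c : nat -> bool) t K M j0 : (K < j0)%N -> (j0 <= M)%N -> c j0 = t ->
  exists m, [/\ (K < m)%N, (m <= M)%N, c m = t & forall j, (K < j < m)%N -> c j != t].
Proof.
move=> Kj0 j0M cj0.
have exP : exists i, [&& (K < i)%N, (i <= M)%N & c i == t] by exists j0; rewrite Kj0 j0M cj0 eqxx.
case: (ex_minnP exP) => m /and3P [Km mM /eqP cm] hmin.
exists m; split => // j /andP [Kj jm]; apply/negP => /eqP cj.
have := hmin j; rewrite Kj cj eqxx andbT /= => h.
have jM : (j <= M)%N by lia.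
by move: (h jM); lia.
Qed.

Definition Cset (t : bool) := [set i | col (rkn i) == t].

Lemma edge_in_Pth t u v : (u < v)%N -> (v < n)%N -> col u = t -> col v = t ->
  (forall j, (u < j < v)%N -> col j != t) -> edge (pt u) (pt v) \in Pth p (Cset t).
Proof.
move=> uv vn cu cv hb.
have un : (u < n)%N by lia.
rewrite inE; apply/existsP; exists (pt u); apply/existsP; exists (pt v).
rewrite eqxx andbT /consec !inE !rkn_pt // cu cv eqxx /= Xpt_lt // uv /=.
apply/forallP => w; apply/implyP; rewrite inE => /eqP cw.
rewrite -(pt_rkn w) !Xpt_lt ?rkn_lt //.
apply/negP => hw; have := hb _ hw.
by rewrite cw eqxx.
Qed.

Lemma cross_exists k : (4 <= n)%N -> (2 <= k)%N -> (k <= n - 2)%N ->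
  exists a b m, [/\ (a < k)%N && (b < k)%N, (k < m)%N && (m < n)%N,
    edge (pt a) (pt k) \in Pth p (Cset (col k)),
    edge (pt b) (pt m) \in Pth p (Cset (~~ col k)) &
    seg_cross (p (pt a)) (p (pt k)) (p (pt b)) (p (pt m))].
Proof.
move=> h4 k2 kn.
move eqt: (col k) => t.
have hl := col_last (ltnW h4).
have [m [km mn cm hm]] : exists m, [/\ (k < m)%N, (m <= n.-1)%N, col m = ~~ t &
    forall j, (k < j < m)%N -> col j != ~~ t].
  case: (boolP (col n.-1 == t)) => hN.
    have c2 : col n.-2 = ~~ t by move: hN; rewrite hl; case: (col n.-2); destruct t.
    have k2' : (k < n.-2)%N.
      case: (k =P n.-2) => [ek|nk]; last by lia.
      by move: c2; rewrite -ek eqt; destruct t.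
    by apply: (@next_ex col (~~ t) k n.-1 n.-2) => //; lia.
  have c1 : col n.-1 = ~~ t by move: hN; case: (col n.-1); destruct t.
  by apply: (@next_ex col (~~ t) k n.-1 n.-1) => //; lia.
have mn' : (m < n)%N by lia.
have hmid := col_mid k2.
rewrite eqt in hmid.
case: (boolP (col k.-1 == t)) => hk1.
  move/eqP: hk1 => hk1.
  have hlab : lab k.-1 != lab k.
    have := hmid ltac:(lia); rewrite hk1.
    by case: (lab k.-1 == lab k); destruct t.
  have [b [bk cb hb]] : exists b, [/\ (b < k.-1)%N, col b = ~~ t &
      forall j, (b < j < k.-1)%N -> col j != ~~ t].
    apply: (@prev_ex col (~~ t) k.-1 (if ~~ t then 1 else 0)%N).
      case: (k =P 2%N) => [e2|n2]; last by case: (~~ t); lia.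
      by move: hk1; rewrite e2 /=; destruct t.
    by destruct t.
  have k1k : (k.-1 < k)%N by lia.
  exists k.-1, b, m; split.
  - by rewrite k1k (ltn_trans bk k1k).
  - by rewrite km mn'.
  - have kn' : (k < n)%N by lia.
    apply: edge_in_Pth => //.
    by move=> j /andP [h1 h2]; lia.
  - have bm : (b < m)%N by lia.
    apply: edge_in_Pth => //.
    move=> j /andP [bj jm].
    case: (ltnP j k.-1) => h1; first by apply: hb; rewrite bj h1.
    case: (ltnP j k) => h2.
      have -> : j = k.-1 by lia.
      by rewrite hk1; destruct t.
    case: (ltnP k j) => h3; first by apply: hm; rewrite h3 jm.
    have -> : j = k by lia.
    by rewrite eqt; destruct t.
  - rewrite seg_cross_com; apply: crossX2 => //; lia.
have ck1 : col k.-1 = ~~ t by move: hk1; case: (col k.-1); destruct t.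
have hlab : lab k.-1 = lab k.
  have := hmid ltac:(lia); rewrite ck1.
  by case: (lab k.-1 =P lab k) => //; destruct t.
have [a [ak ca ha]] : exists a, [/\ (a < k.-1)%N, col a = t &
    forall j, (a < j < k.-1)%N -> col j != t].
  apply: (@prev_ex col t k.-1 (if t then 1 else 0)%N).
    case: (k =P 2%N) => [e2|n2]; last by destruct t; lia.
    by move: ck1; rewrite e2 /=; destruct t.
  by destruct t.
have k1k : (k.-1 < k)%N by lia.
have ak' : (a < k)%N by lia.
have kn' : (k < n)%N by lia.
exists a, k.-1, m; split.
- by rewrite k1k ak'.
- by rewrite km mn'.
- apply: edge_in_Pth => //.
  move=> j /andP [aj jk].
  case: (ltnP j k.-1) => h1; first by apply: ha; rewrite aj h1.
  have -> : j = k.-1 by lia.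
  by rewrite ck1; destruct t.
- have k1m : (k.-1 < m)%N by lia.
  apply: edge_in_Pth => //.
  move=> j /andP [h1 h2].
  case: (ltnP k j) => h3; first by apply: hm; rewrite h3 h2.
  have -> : j = k by lia.
  by rewrite eqt; destruct t.
- apply: crossX1 => //; lia.
Qed.


Definition rt (e : 'I_n * 'I_n) := if X e.1 < X e.2 then e.2 else e.1.
Definition kap (ef : ('I_n * 'I_n) * ('I_n * 'I_n)) :=
  if X (rt ef.1) < X (rt ef.2) then rt ef.1 else rt ef.2.

Lemma rt_edge u v : X u < X v -> rt (edge u v) = v.
Proof.
move=> h; rewrite /rt; case: (edge_cases u v) => -> /=; first by rewrite h.
by rewrite ltNge (ltW h).
Qed.

Lemma seg_cross_edge u v w z :
  seg_cross (p (edge u v).1) (p (edge u v).2) (p (edge w z).1) (p (edge w z).2)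
  = seg_cross (p u) (p v) (p w) (p z).
Proof.
case: (edge_cases u v) => ->; case: (edge_cases w z) => -> /=.
- by [].
- by rewrite seg_cross_sw2.
- by rewrite seg_cross_sw1.
- by rewrite seg_cross_sw1 seg_cross_sw2.
Qed.

Lemma main_count : (4 <= n)%N -> forall ER EB,
  is_MST p (Cset true) ER -> is_MST p (~: Cset true) EB -> (n - 3 <= crossings p ER EB)%N.
Proof.
move=> h4 ER EB hR hB.
have eR := mst_eq hflat hR.
have cB : ~: Cset true = Cset false.
  by apply/setP => i; rewrite !inE; case: (col (rkn i)).
rewrite cB in hB; have eB := mst_eq hflat hB.
rewrite /crossings; set C := [set ef | _].
pose g (j : 'I_(n - 3)) := pt (j + 2).
have ginj : injective g.
  move=> i j /(congr1 rkn).
  have hi : (i + 2 < n)%N by have := ltn_ord i; lia.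
  have hj : (j + 2 < n)%N by have := ltn_ord j; lia.
  rewrite /g !rkn_pt //.
  by move=> h; apply: val_inj; rewrite /=; lia.
have sub : g @: setT \subset kap @: C.
  apply/subsetP => x /imsetP [j _ ->].
  have k2 : (2 <= j + 2)%N by lia.
  have kn : (j + 2 <= n - 2)%N by have := ltn_ord j; lia.
  have [a [b [m [/andP [ak bk] /andP [km mn] hea heb hx]]]] := cross_exists h4 k2 kn.
  have kn' : (j + 2 < n)%N by lia.
  have an : (a < n)%N by lia.
  have bn : (b < n)%N by lia.
  rewrite /g; case ck: (col (j + 2)); rewrite ck /= in hea heb.
    apply/imsetP; exists (edge (pt a) (pt (j + 2)), edge (pt b) (pt m)).
      by rewrite inE /= eR eB hea heb /= seg_cross_edge hx.
    by rewrite /kap /= !rt_edge ?Xpt_lt //; case: (ltnP (j + 2) m) => // h; lia.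
  apply/imsetP; exists (edge (pt b) (pt m), edge (pt a) (pt (j + 2))).
    by rewrite inE /= eR eB hea heb /= seg_cross_edge seg_cross_com hx.
  by rewrite /kap /= !rt_edge ?Xpt_lt //; case: (ltnP m (j + 2)) => // h; lia.
have := leq_imset_card kap C.
have := subset_leq_card sub.
by rewrite card_imset // cardsT card_ord; lia.
Qed.

End Main.

Theorem lemma5 (R : realType) (n : nat) (p : 'I_n -> R * R) :
  injective p -> generic p -> flat p -> convex_position p ->
  cr_ge p (n - 3).
Proof.
move=> _ [hnc _] hfl hcv.
case: (leqP n 3) => hn.
  by exists set0 => ER EB _ _; have -> : (n - 3 = 0)%N by lia.
have n0 : (0 < n)%N by lia.
exists (Cset hfl (Ordinal n0) true).
by apply: main_count.
Qed.
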